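(* Let $s\in[n]$ with $s\le n-2$. Then \[ \langle1|^{\otimes d}\left(\mathrm{tr}_{n-d}|\psi_s\rangle\langle\psi_s|\right)|1\rangle^{\otimes d}\geq 1-O(ds/n), \] where $\mathrm{tr}_{n-d}$ denotes the partial trace over the last $n-d$ qubits and the $O$-notation refers to $n\to\infty$.
   Context: On $n$ qubits, let $\omega=e^{2\pi i/n}$, $\sigma_m^-=|0\rangle\langle1|$ on qubit $m$, $S_-=\sum_{m=1}^n\sigma_m^-$, $|\Psi\rangle=\overline{\omega}\sum_{m=1}^n\omega^m\sigma_m^-|1\rangle^{\otimes n}$, and for $s=0,\dots,n-2$, $|\psi_s\rangle=S_-^s|\Psi\rangle/\|S_-^s|\Psi\rangle\|$ (the normalized magnon states). *)

(* Defs.v *)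
From HB Require Import structures.
From mathcomp Require Import all_boot all_order all_algebra.
From mathcomp Require Import complex.
From mathcomp Require Import reals trigo.
Import Order.TTheory GRing.Theory Num.Theory.
Local Open Scope ring_scope.

Section Magnon.
Variable R : realType.
Local Notation C := (R[i]).

(* Computational basis of n qubits: b i = true means qubit i is |1>,
   false means |0>.  Qubit m (1-based in the paper) is index m-1. *)
Definition basis (n : nat) := {ffun 'I_n -> bool}.
(* A (not necessarily normalized) vector of (C^2)^{\otimes n}, given by its
   coordinates in the computational basis. *)
Definition state (n : nat) := basis n -> C.

Definition omega (n : nat) : C :=
  Complex (cos (2 * pi / n%:R)) (sin (2 * pi / n%:R)).

Definition all_ones_state (n : nat) : state n :=
  fun y => if y == [ffun => true] then 1 else 0.

(* sigma_m^- = |0><1| acting on qubit m: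
   <y| sigma_m^- v> = [y_m = 0] * <y with y_m := 1 | v>. *)
Definition sigma_minus (n : nat) (m : 'I_n) (v : state n) : state n :=
  fun y => if y m then 0 else v [ffun j => if j == m then true else y j].

Definition S_minus (n : nat) (v : state n) : state n :=
  fun y => \sum_(m < n) sigma_minus n m v y.

(* |Psi> = conj(omega) sum_{m=1}^n omega^m sigma_m^- |1>^{\otimes n}
   (paper's qubit m is index m-1 here, hence the exponent m.+1). *)
Definition Psi (n : nat) : state n :=
  fun y => (omega n)^* *
    \sum_(m < n) (omega n) ^+ m.+1 * sigma_minus n m (all_ones_state n) y.

Definition vnorm (n : nat) (v : state n) : C :=
  sqrtC (\sum_(y : basis n) v y * (v y)^*).

Definition magnon_unnorm (n s : nat) : state n := iter s (S_minus n) (Psi n).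
Definition magnon (n s : nat) : state n :=
  fun y => magnon_unnorm n s y / vnorm n (magnon_unnorm n s).

Definition density (n : nat) (v : state n) : basis n -> basis n -> C :=
  fun x y => v x * (v y)^*.

Definition bits_at (k : nat) (a : basis k) (i : nat) : bool :=
  if @insub _ (fun j => j < k)%N ('I_k) i is Some j then a j else false.

Definition join (n d : nat) (a : basis d) (b : basis (n - d)) : basis n :=
  [ffun i : 'I_n => if (i < d)%N then bits_at d a i else bits_at (n - d) b (i - d)].

(* Partial trace over the last n-d qubits (meaningful for d <= n). *)
Definition ptrace_last (n d : nat) (rho : basis n -> basis n -> C)
  : basis d -> basis d -> C :=
  fun a b => \sum_(y : basis (n - d)) rho (join n d a y) (join n d b y).

Definition ones (d : nat) : basis d := [ffun => true].

End Magnon.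

(* Main.v *)
Require Import Defs.
From HB Require Import structures.
From mathcomp Require Import all_boot all_order all_algebra.
From mathcomp Require Import complex.
From mathcomp Require Import reals trigo.
From mathcomp Require Import ring lra zify.
Import Order.TTheory GRing.Theory Num.Theory.
Local Open Scope ring_scope.

Section Om.
Variable R : realType.
Local Notation C := (R[i]).

Lemma cmulE (a b c d : R) :
  (Complex a b : C) * Complex c d = Complex (a * c - b * d) (a * d + b * c).
Proof. by []. Qed.

Lemma omega_exp (n k : nat) : omega R n ^+ k =
  Complex (cos (k%:R * (2 * pi / n%:R))) (sin (k%:R * (2 * pi / n%:R))).
Proof.
elim: k => [|k IH]; first by rewrite expr0 !mul0r cos0 sin0.
rewrite exprS IH /omega; set t := (2 * pi / n%:R).
rewrite cmulE -[k.+1]addn1 natrD mulrDl mul1r cosD sinD.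
by congr Complex; ring.
Qed.

Lemma omega_n (n : nat) : (0 < n)%N -> omega R n ^+ n = 1.
Proof.
move=> n0; rewrite omega_exp.
have -> : n%:R * (2 * pi / n%:R) = pi *+ 2 :> R.
  by rewrite mulrC divfK ?pnatr_eq0 -?lt0n // mulr_natl.
by rewrite cos2pi sin2pi.
Qed.

Lemma omega_norm (n : nat) : `|omega R n| = 1.
Proof. by rewrite normc_def /= cos2Dsin2 sqrtr1. Qed.

Lemma omega_conjM (n : nat) : (omega R n)^* * omega R n = 1.
Proof. by rewrite mulrC -normCK omega_norm expr1n. Qed.

Lemma omega_prim (n k : nat) : (0 < k < n)%N -> omega R n ^+ k != 1.
Proof.
case/andP=> k0 kn; rewrite omega_exp; apply/negP => /eqP [] Hc _.
set x := k%:R * (2 * pi / n%:R) in Hc.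
have n0 : (0 : R) < n%:R by rewrite ltr0n (ltn_trans k0).
have n0' : (n%:R : R) != 0 by rewrite gt_eqF.
have ex2 : x / 2 = pi * (k%:R / n%:R) by rewrite /x; field.
have hx : 0 < x / 2 < pi.
  rewrite ex2; apply/andP; split.
    by rewrite mulr_gt0 ?pi_gt0 // divr_gt0 // ltr0n.
  by rewrite gtr_pMr ?pi_gt0 // ltr_pdivrMr // mul1r ltr_nat.
have hs := sin_gt0_pi hx.
have ex : x = (x / 2) *+ 2 by rewrite -mulr_natr mulfVK // pnatr_eq0.
rewrite ex cos_mulr2n -mulr_natr in Hc.
have h2 := sin2cos2 (x / 2).
nra.
Qed.
End Om.

Section Amp.
Variable R : realType.
Local Notation C := (R[i]).
Variable n : nat.
Local Notation om := (omega R n).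

Definition zer (y : basis n) : {set 'I_n} := [set m | ~~ y m].
Definition upd (y : basis n) (m : 'I_n) : basis n :=
  [ffun j => if j == m then true else y j].

Lemma zer_upd (y : basis n) (m : 'I_n) : ~~ y m -> zer (upd y m) = zer y :\ m.
Proof.
move=> ym; apply/setP=> j; rewrite !inE ffunE.
by case: (eqVneq j m) => [->|].
Qed.

Lemma sm_ones (y : basis n) (m : 'I_n) : sigma_minus R n m (all_ones_state R n) y =
  if zer y == [set m] then 1 else 0.
Proof.
rewrite /sigma_minus /all_ones_state -/(upd y m).
case ym: (y m).
  case: eqP => // /setP/(_ m); by rewrite !inE ym eqxx.
have -> : (upd y m == [ffun => true]) = (zer y == [set m]) => //.
apply/eqP/eqP.
  move/ffunP=> H; apply/setP=> j; rewrite !inE.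
  have := H j; rewrite !ffunE; case: (eqVneq j m) => [->|_ ->] //.
  by rewrite ym.
move=> /setP H.
apply/ffunP=> j; rewrite !ffunE; case: (eqVneq j m) => // jm.
by have := H j; rewrite !inE (negbTE jm) => /negbFE.
Qed.

Definition amp (k : nat) (y : basis n) : C :=
  if #|zer y| == k.+1 then k`!%:R * (om^* * \sum_(m in zer y) om ^+ m.+1) else 0.

Lemma magnon_formula k (y : basis n) : magnon_unnorm R n k y = amp k y.
Proof.
elim: k y => [|k IH] y.
  rewrite /magnon_unnorm /= /Psi /amp fact0 mul1r.
  under eq_bigr do rewrite sm_ones.
  case: (boolP (#|zer y| == 1%N)) => [/cards1P [m0 ->]|H].
    rewrite big_set1 (bigD1 m0) //= eqxx mulr1 big1 ?addr0 // => i im.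
    case: eqP => [/setP H|]; last by rewrite mulr0.
    by have := H m0; rewrite !inE eqxx eq_sym (negbTE im).
  rewrite big1 ?mulr0 // => i _.
  by case: eqP => [E|]; [rewrite E cards1 in H | rewrite mulr0].
rewrite /magnon_unnorm iterS -/(magnon_unnorm R n k) /S_minus /sigma_minus.
under eq_bigr do rewrite IH.
rewrite (bigID (fun m => y m)) /= big1 ?add0r; last by move=> i ->.
rewrite (eq_bigl (fun i => i \in zer y)); last by move=> i; rewrite inE.
rewrite /amp.
case: (boolP (#|zer y| == k.+2)) => Hc.
  rewrite (eq_bigr (fun m : 'I_n => k`!%:R * (om^* * (\sum_(i in zer y) om ^+ i.+1 - om ^+ m.+1)))); last first.
    move=> m mz; have ym : ~~ y m by move: mz; rewrite inE.
    rewrite (negbTE ym) -/(upd y m) zer_upd //.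
    rewrite (cardsD1 m) mz add1n eqSS in Hc.
    rewrite (eqP Hc) eqxx.
    by rewrite (big_setD1 _ mz) /= addrC addrK.
  rewrite -big_distrr /= -big_distrr /= sumrB sumr_const (eqP Hc).
  by rewrite factS natrM; ring.
rewrite big1 // => m mz.
have ym : ~~ y m by move: mz; rewrite inE.
rewrite (negbTE ym) -/(upd y m) zer_upd // ifN //.
by move: Hc; rewrite (cardsD1 m) mz add1n eqSS.
Qed.
End Amp.

Section Rot.
Variable R : realType.
Local Notation C := (R[i]).
Variable n' : nat.
Local Notation n := n'.+1.
Local Notation om := (omega R n).

Definition rotx (j : 'I_n) (x : basis n) : basis n := [ffun i => x (i + j)].

Lemma rotxK j : cancel (rotx j) (rotx (- j)).
Proof. by move=> x; apply/ffunP=> i; rewrite !ffunE addrNK. Qed.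

Lemma rotx_bij j : bijective (rotx j).
Proof. by exists (rotx (- j)) => x; apply/ffunP=> i; rewrite !ffunE ?addrNK ?addrK. Qed.

Lemma val_addZp (i j : 'I_n) : nat_of_ord (i + j) = ((i + j) %% n)%N.
Proof. by []. Qed.

Lemma om_addZp (i j : 'I_n) : om ^+ (nat_of_ord (i + j)%R).+1 = om ^+ j * om ^+ i.+1.
Proof.
by rewrite val_addZp exprS expr_mod ?omega_n // exprD exprS; ring.
Qed.

Lemma zer_rotx j x : zer n (rotx j x) = (fun i => i + j) @^-1: zer n x.
Proof. by apply/setP=> i; rewrite !inE ffunE. Qed.

Lemma amp_rotx s j x : `|amp R n s (rotx j x)| = `|amp R n s x|.
Proof.
have inj : injective (fun i : 'I_n => i + j) by apply: (can_inj (addrK j)).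
rewrite /amp zer_rotx card_preimset //.
case: ifP => // _.
rewrite !normrM; congr (_ * (_ * _)).
rewrite [in RHS](reindex_inj inj).
under [in RHS]eq_bigr do rewrite om_addZp.
rewrite -mulr_sumr normrM normrX omega_norm expr1n mul1r.
by congr `|_|; apply: eq_bigl => i; rewrite !inE.
Qed.

Definition gg s (x : basis n) : C := `|amp R n s x| ^+ 2.
Definition QQ s (j : 'I_n) : C := \sum_(x : basis n | ~~ x j) gg s x.

Lemma QQ_const s j : QQ s j = QQ s 0.
Proof.
rewrite /QQ (reindex (rotx (- j))); last by apply: onW_bij; exact: rotx_bij.
by apply: eq_big => x; rewrite /gg ?amp_rotx // ffunE addrN.
Qed.

Lemma gg_supp s x : gg s x *+ #|zer n x| = gg s x *+ s.+1.
Proof.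
rewrite /gg /amp; case: eqP => [->|] //.
by rewrite normr0 expr0n /= !mul0rn.
Qed.

Lemma sumQQ s : \sum_(j : 'I_n) QQ s j = (\sum_(x : basis n) gg s x) *+ s.+1.
Proof.
rewrite /QQ; under eq_bigr do rewrite big_mkcond /=.
rewrite exchange_big /= -sumrMnl.
rewrite [RHS](eq_bigr (fun x => gg s x *+ #|zer n x|)); last by move=> x _; rewrite gg_supp.
apply: eq_bigr => x _.
rewrite -sumr_const [RHS]big_mkcond /=; apply: eq_bigr => j _.
by rewrite inE.
Qed.

Lemma QQ_val s : QQ s 0 *+ n = (\sum_(x : basis n) gg s x) *+ s.+1.
Proof.
by rewrite -sumQQ (eq_bigr (fun _ => QQ s 0)) ?sumr_const ?card_ord // => j _; rewrite QQ_const.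
Qed.
End Rot.

Lemma bits_atE k (a : basis k) i (H : (i < k)%N) : bits_at k a i = a (Ordinal H).
Proof. by rewrite /bits_at insubT. Qed.

Section Join.
Variable R : realType.
Local Notation C := (R[i]).
Variables n d : nat.
Hypothesis hd : (d <= n)%N.

Lemma rsh_proof (k : 'I_(n - d)) : (d + k < n)%N.
Proof. have := ltn_ord k; lia. Qed.

Definition rsh (k : 'I_(n - d)) : 'I_n := Ordinal (rsh_proof k).

Definition spl (x : basis n) : basis d * basis (n - d) :=
  ([ffun i : 'I_d => x (widen_ord hd i)], [ffun k : 'I_(n - d) => x (rsh k)]).

Lemma join_low (a : basis d) y (j : 'I_d) : join n d a y (widen_ord hd j) = a j.
Proof.
rewrite /join ffunE /= ltn_ord (bits_atE _ _ _ (ltn_ord j)).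
by congr (a _); apply: val_inj.
Qed.

Lemma join_high (a : basis d) y (k : 'I_(n - d)) : join n d a y (rsh k) = y k.
Proof.
rewrite /join ffunE /=.
have -> : (d + k < d)%N = false by lia.
have H : (d + k - d < n - d)%N by have := ltn_ord k; lia.
rewrite (bits_atE _ _ _ H); congr (y _); apply: val_inj => /=; lia.
Qed.

Lemma join_spl x : join n d (spl x).1 (spl x).2 = x.
Proof.
apply/ffunP => i; rewrite /join ffunE /=.
case: ifP => H.
  by rewrite (bits_atE _ _ _ H) ffunE; congr (x _); apply: val_inj.
have H' : (i - d < n - d)%N by have := ltn_ord i; lia.
rewrite (bits_atE _ _ _ H') ffunE; congr (x _); apply: val_inj => /=; lia.
Qed.

Lemma spl_join a y : spl (join n d a y) = (a, y).
Proof.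
rewrite /spl; congr pair; apply/ffunP => i; rewrite ffunE.
  exact: join_low.
exact: join_high.
Qed.

Lemma join_sum (F : basis n -> C) :
  \sum_(x : basis n) F x = \sum_(a : basis d) \sum_(y : basis (n - d)) F (join n d a y).
Proof.
rewrite pair_big /= (reindex (fun p : basis d * basis (n - d) => join n d p.1 p.2)) //.
exists spl => [[a y] _|x _]; first by rewrite spl_join.
exact: join_spl.
Qed.
End Join.

Section Main.
Variable R : realType.
Local Notation C := (R[i]).
Variable n' : nat.
Local Notation n := n'.+1.
Local Notation om := (omega R n).

Lemma om_neq0 : om != 0.
Proof.
apply/negP => /eqP H; have := @omega_n R n (ltn0Sn n').
by rewrite H expr0n /= => /eqP; rewrite eq_sym oner_eq0.
Qed.

Lemma amp_x0_neq0 s (hs : (s.+1 < n)%N) :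
  amp R n s [ffun i : 'I_n => (s < i)%N] != 0.
Proof.
have hs' : (s.+1 <= n)%N by apply: ltnW.
have Z : zer n [ffun i : 'I_n => (s < i)%N] = [set widen_ord hs' i | i in 'I_s.+1].
  apply/setP => i; rewrite inE ffunE -leqNgt; apply/idP/imsetP.
    by move=> H; exists (Ordinal (H : (i < s.+1)%N)) => //; apply: val_inj.
  by case=> j _ ->; rewrite /= -ltnS.
have inj : {in 'I_s.+1 &, injective (widen_ord hs')}.
  by move=> x y _ _ /(congr1 val) /= H; apply: val_inj.
rewrite /amp Z card_in_imset // card_ord eqxx big_imset //=.
rewrite !mulf_neq0 ?pnatr_eq0 -?lt0n ?fact_gt0 ?conjC_eq0 ?om_neq0 //.
have -> : \sum_(i in 'I_s.+1) om ^+ (widen_ord hs' i).+1 = om * \sum_(i < s.+1) om ^+ i.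
  by rewrite mulr_sumr; apply: eq_bigr => i _; rewrite exprS.
rewrite mulf_neq0 ?om_neq0 //; apply/negP => /eqP H.
have := @omega_prim R n s.+1; rewrite hs /= => /(_ isT).
by rewrite -subr_eq0 subrX1 H mulr0 eqxx.
Qed.

Lemma gg_ge0 s x : 0 <= gg R n' s x.
Proof. by rewrite /gg exprn_ge0. Qed.

Lemma D_gt0 s (hs : (s.+1 < n)%N) : 0 < \sum_(x : basis n) gg R n' s x.
Proof.
rewrite (bigD1 [ffun i : 'I_n => (s < i)%N]) //=.
apply: (@lt_le_trans _ _ (gg R n' s [ffun i : 'I_n => (s < i)%N])).
  by rewrite /gg exprn_gt0 // normr_gt0 amp_x0_neq0.
by rewrite lerDl; apply: sumr_ge0 => x _; exact: gg_ge0.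
Qed.

Lemma main_bound s d (hd : (d <= n)%N) :
  \sum_(x : basis n) gg R n' s x <=
  \sum_(y : basis (n - d)) gg R n' s (join n d (ones d) y) + QQ R n' s 0 *+ d.
Proof.
pose Phi (x : basis n) := \sum_(j : 'I_d) (if ~~ x (widen_ord hd j) then gg R n' s x else 0).
have HP : \sum_(x : basis n) Phi x = QQ R n' s 0 *+ d.
  rewrite /Phi exchange_big /= -[d in RHS]card_ord -sumr_const.
  apply: eq_bigr => j _; rewrite -big_mkcond /=.
  by rewrite -(QQ_const R n' s (widen_ord hd j)).
rewrite -HP (@join_sum R n d hd) (@join_sum R n d hd Phi).
rewrite [in X in X <= _](bigD1 (ones d)) //= [in X in _ <= _ + X](bigD1 (ones d)) //=.
apply: lerD => //.
apply: ler_wpDl.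
  apply: sumr_ge0 => y _; apply: sumr_ge0 => j _.
  by case: ifP => // _; exact: gg_ge0.
apply: ler_sum => a aN; apply: ler_sum => y _.
have [j aj] : exists j, ~~ a j.
  apply/existsP; apply: contraR aN => /existsPn H; apply/eqP/ffunP => j.
  by rewrite ffunE; exact: (negbNE (H j)).
rewrite /Phi (bigD1 j) //= (@join_low n d hd) aj.
rewrite lerDl; apply: sumr_ge0 => i _.
by case: ifP => // _; exact: gg_ge0.
Qed.

Lemma ptrace_eq s d :
  ptrace_last R n d (density R n (magnon R n s)) (ones d) (ones d) =
  (\sum_(y : basis (n - d)) gg R n' s (join n d (ones d) y)) / (\sum_(x : basis n) gg R n' s x).
Proof.
rewrite /ptrace_last /density mulr_suml; apply: eq_bigr => y _.
have Hv : vnorm R n (magnon_unnorm R n s) = sqrtC (\sum_(x : basis n) gg R n' s x).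
  by rewrite /vnorm; congr sqrtC; apply: eq_bigr => x _; rewrite magnon_formula /gg normCK.
rewrite /magnon Hv -normCK normf_div expr_div_n -(normrX _ (sqrtC _)) sqrtCK magnon_formula.
rewrite [`|\sum_x _|]ger0_norm //; apply: sumr_ge0 => x _; exact: gg_ge0.
Qed.
End Main.

Theorem lemma21 (R : realType) :
  exists K : R, exists N : nat,
    forall n s d : nat, (N <= n)%N -> (1 <= s)%N -> (s <= n - 2)%N -> (d <= n)%N ->
      ((1 - K * d%:R * s%:R / n%:R)%:C)%C
        <= ptrace_last R n d (density R n (magnon R n s)) (ones d) (ones d).
Proof.
exists 2, 3%N => n s d Hn s1 sn dn.
case: n Hn sn dn => [//|n'] Hn sn dn.
have hs : (s.+1 < n'.+1)%N by lia.
rewrite ptrace_eq.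
set D := \sum_(x : basis n'.+1) gg R n' s x.
set S1 := \sum_(y : basis (n'.+1 - d)) gg R n' s (join n'.+1 d (ones d) y).
have hD : 0 < D := @D_gt0 R n' s hs.
have hB := @main_bound R n' s d dn; rewrite -/D -/S1 in hB.
have hQ := QQ_val R n' s; rewrite -/D in hQ.
have n0 : (n'.+1%:R : R[i]) != 0 by rewrite pnatr_eq0.
have EQ : QQ R n' s 0 = D * s.+1%:R / n'.+1%:R.
  by rewrite mulr_natr -hQ -(mulr_natr (QQ R n' s 0)) mulfK.
rewrite ler_pdivlMr //.
have -> : ((1 - 2 * d%:R * s%:R / n'.+1%:R)%:C)%C = 1 - 2 * d%:R * s%:R / n'.+1%:R :> R[i].
  by rewrite rmorphB rmorph1 !rmorphM fmorphV !rmorph_nat.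
apply: (le_trans _ (_ : D - QQ R n' s 0 *+ d <= S1)); last by rewrite lerBlDr.
rewrite mulrBl mul1r; apply: lerB => //.
rewrite EQ.
have E1 : D * s.+1%:R / n'.+1%:R *+ d = D * ((s.+1 * d)%:R / n'.+1%:R).
  by rewrite -mulr_natr natrM; ring.
have E2 : 2 * d%:R * s%:R / n'.+1%:R * D = D * ((2 * d * s)%:R / n'.+1%:R).
  by rewrite !natrM; ring.
rewrite E1 E2 ler_pM2l // ler_pM2r ?invr_gt0 ?ltr0n // ler_nat; nia.
Qed.
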